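(* Let $m\ge 2$ be an integer and let $H$ be a finite simple connected graph of order at least $2$ with $n(H) \le m$. The Cartesian product $K_m \,\square\, H$ is well-dominated if and only if one of the following holds: (1) $m=2$ and $H$ is isomorphic to $K_2$; (2) $m=3$ and $H$ is isomorphic to $K_3$ or to the path $P_3$; (3) $m \ge 4$ and $H$ is isomorphic to $K_m$.
   Context: $n(H)$ is the order of $H$. A graph is well-dominated if every minimal (with respect to inclusion) dominating set is a minimum dominating set. The Cartesian product $G\,\square\, H$ has vertex set $V(G)\times V(H)$, with $(g_1,h_1)$ adjacent to $(g_2,h_2)$ iff either ($g_1=g_2$ and $h_1h_2\in E(H)$) or ($h_1=h_2$ and $g_1g_2\in E(G)$). *)

(* Defs.v *)
From mathcomp Require Import all_boot.
Set Implicit Arguments. Unset Strict Implicit. Unset Printing Implicit Defensive.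

Definition simple_graph (T : finType) (e : rel T) : Prop :=
  symmetric e /\ irreflexive e.

Definition connected_graph (T : finType) (e : rel T) : Prop :=
  forall x y : T, connect e x y.

Definition dominating (T : finType) (e : rel T) (D : {set T}) : Prop :=
  forall v : T, v \in D \/ exists2 u, u \in D & e u v.

Definition minimal_dominating (T : finType) (e : rel T) (D : {set T}) : Prop :=
  dominating e D /\ forall D' : {set T}, D' \proper D -> ~ dominating e D'.

Definition minimum_dominating (T : finType) (e : rel T) (D : {set T}) : Prop :=
  dominating e D /\ forall D' : {set T}, dominating e D' -> #|D| <= #|D'|.

Definition well_dominated (T : finType) (e : rel T) : Prop :=
  forall D : {set T}, minimal_dominating e D -> minimum_dominating e D.

Definition graph_iso (T1 T2 : finType) (e1 : rel T1) (e2 : rel T2) : Prop :=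
  exists f : T1 -> T2, bijective f /\ forall x y, e2 (f x) (f y) = e1 x y.

Definition Kedge (m : nat) : rel 'I_m := fun i j => i != j.

Definition P3edge : rel 'I_3 :=
  fun i j => ((i : nat) == j.+1) || ((j : nat) == i.+1).

Definition cart_edge (T1 T2 : finType) (e1 : rel T1) (e2 : rel T2)
  : rel (T1 * T2) :=
  fun x y => ((x.1 == y.1) && e2 x.2 y.2) || ((x.2 == y.2) && e1 x.1 y.1).

(* Main.v *)
Require Import Defs.
From mathcomp Require Import all_boot.
From Stdlib Require Import Classical.
Set Implicit Arguments. Unset Strict Implicit. Unset Printing Implicit Defensive.

Section Gen.
Variables (T : finType) (e : rel T).

Lemma exists_min (D : {set T}) : dominating e D ->
  exists D' : {set T}, D' \subset D /\ minimal_dominating e D'.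
Proof.
suff H : forall k (D : {set T}), #|D| < k -> dominating e D ->
  exists D' : {set T}, D' \subset D /\ minimal_dominating e D' by apply: H (ltnSn _).
elim=> [|k IH] {}D // HD Hdom.
case: (classic (minimal_dominating e D)) => [Hm|Hm]; first by exists D.
have [D'' [Hp Hd]] : exists D'' : {set T}, D'' \proper D /\ dominating e D''.
  apply: NNPP => Hn; apply: Hm; split=> // D'' Hp Hd; apply: Hn; by exists D''.
have Hc := proper_card Hp.
case: (IH D'' _ Hd) => [|D' [Hs Hm']]; first by apply: leq_trans Hc _.
exists D'; split=> //; exact: subset_trans Hs (proper_sub Hp).
Qed.

Lemma priv_in (D D' : {set T}) x v : D' \subset D -> dominating e D' ->
  (forall u, u \in D -> (u == v) || e u v -> u = x) -> x \in D'.
Proof.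
move=> Hs Hdom Hp; case: (Hdom v) => [Hv|[u Hu Huv]].
  by rewrite -(Hp v (subsetP Hs v Hv)) ?eqxx.
by rewrite -(Hp u (subsetP Hs u Hu)) ?Huv ?orbT.
Qed.

Lemma proj_lower m (p : T -> 'I_m) (D : {set T}) :
  (forall i, exists2 u, u \in D & p u = i) -> m <= #|D|.
Proof.
move=> H.
have Hs : [set: 'I_m] \subset p @: D.
  apply/subsetP => i _; case: (H i) => u Hu <-; exact: imset_f.
have := subset_leq_card Hs; rewrite cardsT card_ord => Hl.
exact: leq_trans Hl (leq_imset_card _ _).
Qed.

Lemma proj_bound m (p : T -> 'I_m) (D : {set T}) :
  (forall u v, p u = p v -> u != v -> e u v) -> minimal_dominating e D ->
  (forall i, exists2 u, u \in D & p u = i) -> #|D| <= m.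
Proof.
move=> He [Hd Hmin] Hc.
have cov_dom : forall D0 : {set T}, (forall i, exists2 u, u \in D0 & p u = i) -> dominating e D0.
  move=> D0 H v; case: (H (p v)) => u Hu Hpu.
  case: (eqVneq u v) => [<-|Hne]; [by left | right; exists u => //; exact: He].
case: (classic (exists x y, [/\ x \in D, y \in D, p x = p y & x != y])) => [[x [y [Hx Hy Hxy Hne]]]|Hn].
  exfalso; apply: (Hmin (D :\ x)); first exact: properD1.
  apply: cov_dom => i; case: (Hc i) => u Hu Hpu.
  case: (eqVneq u x) => [Eu|Hux].
    exists y; last by rewrite -Hxy -Hpu Eu.
    by rewrite !inE eq_sym Hne.
  by exists u; rewrite // !inE Hux.
have Hinj : {in D &, injective p}.
  move=> x y Hx Hy Hxy; apply/eqP/negPn/negP => Hne; apply: Hn; by exists x, y.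
rewrite -(card_in_imset Hinj).
have := subset_leq_card (subsetT (p @: D)); by rewrite cardsT card_ord.
Qed.

End Gen.

Lemma rook_wd m : well_dominated (cart_edge (@Kedge m) (@Kedge m)).
Proof.
set E := cart_edge _ _.
have Hf : forall u v : 'I_m * 'I_m, u.1 = v.1 -> u != v -> E u v.
  move=> [a b] [c d] /= Hac Hne; rewrite /E /cart_edge /Kedge /= Hac eqxx /= andbF orbF.
  by apply/negP => /eqP Hbd; move: Hne; rewrite Hac Hbd eqxx.
have Hs : forall u v : 'I_m * 'I_m, u.2 = v.2 -> u != v -> E u v.
  move=> [a b] [c d] /= Hbd Hne; rewrite /E /cart_edge /Kedge /= Hbd eqxx /=.
  rewrite andbF /=; by apply/negP => /eqP Hac; move: Hne; rewrite Hac Hbd eqxx.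
have cover : forall D, dominating E D ->
   (forall i, exists2 u, u \in D & u.1 = i) \/ (forall i, exists2 u, u \in D & u.2 = i).
  move=> D Hd; case: (classic (forall i, exists2 u, u \in D & u.1 = i)) => [H|H]; [by left|right].
  have [i0 Hi0] : exists i0, forall u, u \in D -> u.1 != i0.
    apply: NNPP => Hn; apply: H => i; apply: NNPP => Hn2; apply: Hn; exists i => u Hu.
    by apply/negP => /eqP Hui; apply: Hn2; exists u.
  move=> h; case: (Hd (i0, h)) => [Hin|[[j k] Hu Huv]]; first by have := Hi0 _ Hin; rewrite eqxx.
  move: Huv; rewrite /E /cart_edge /Kedge /=; case/orP => /andP [/eqP Hj Hk].
    by have := Hi0 _ Hu; rewrite Hj eqxx.
  by exists (j, k); rewrite //= (eqP Hk).
move=> D HD; split; first by case: HD.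
move=> D' HD'.
have Hb : #|D| <= m.
  case: (cover D (proj1 HD)) => Hc; [exact: (proj_bound Hf HD Hc) | exact: (proj_bound Hs HD Hc)].
apply: leq_trans Hb _.
case: (cover D' HD') => Hc; [exact: (proj_lower Hc) | exact: (proj_lower Hc)].
Qed.

Lemma wd_transfer (A B : finType) (EA : rel A) (EB : rel B) (g : A -> B) :
  bijective g -> (forall x y, EB (g x) (g y) = EA x y) ->
  well_dominated EB -> well_dominated EA.
Proof.
move=> [g' gK g'K] Hg Hwd.
have ginj : injective g := can_inj gK.
have domE : forall D, dominating EA D <-> dominating EB (g @: D).
  move=> D; split.
  - move=> Hd v; rewrite -(g'K v); case: (Hd (g' v)) => [Hin|[u Hu Huv]].
      by left; exact: imset_f.
    by right; exists (g u); [exact: imset_f | rewrite Hg].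
  - move=> Hd v; case: (Hd (g v)) => [Hin|[u Hu Huv]].
      by left; rewrite (mem_imset _ _ ginj) in Hin.
    right; case/imsetP: Hu => w Hw Ew; exists w => //; by rewrite -Hg -Ew.
have preK : forall D2 : {set B}, g @: (g @^-1: D2) = D2.
  move=> D2; apply/setP => y; apply/imsetP/idP.
    by case=> x; rewrite inE => Hx ->.
  by move=> Hy; exists (g' y); rewrite ?inE g'K.
move=> D [Hd Hmin].
have Hd2 : dominating EB (g @: D) by apply/domE.
have Hmin2 : minimal_dominating EB (g @: D).
  split=> // D2 Hp Hd2'.
  apply: (Hmin (g @^-1: D2)); last by apply/domE; rewrite preK.
  rewrite properEcard; apply/andP; split.
    apply/subsetP => x; rewrite inE => Hx.
    by have := subsetP (proper_sub Hp) _ Hx; rewrite (mem_imset _ _ ginj).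
  have Hc : #|g @^-1: D2| = #|D2| by rewrite -{2}(preK D2) card_imset.
  by rewrite Hc; have := proper_card Hp; rewrite card_imset.
have [_ Hmm] := Hwd _ Hmin2.
split=> // D' Hd'.
rewrite -(card_imset D ginj) -(card_imset D' ginj); apply: Hmm; by apply/domE.
Qed.

Lemma cart_transfer m (T1 T2 : finType) (e1 : rel T1) (e2 : rel T2) (f : T1 -> T2) :
  bijective f -> (forall x y, e2 (f x) (f y) = e1 x y) ->
  well_dominated (cart_edge (@Kedge m) e2) -> well_dominated (cart_edge (@Kedge m) e1).
Proof.
move=> [f' fK f'K] Hf; apply: (@wd_transfer _ _ _ _ (fun u => (u.1, f u.2))).
  by exists (fun u => (u.1, f' u.2)) => [[a b]|[a b]] /=; rewrite ?fK ?f'K.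
move=> [a b] [c d]; rewrite /cart_edge /= Hf (inj_eq (can_inj fK)) //.
Qed.

Lemma iso_complete_wd m (T : finType) (e : rel T) :
  graph_iso e (@Kedge m) -> well_dominated (cart_edge (@Kedge m) e).
Proof.
case=> f [Hb Hf]; apply: (cart_transfer Hb) => //; exact: rook_wd.
Qed.

Lemma card_count_seq (T : finType) (D : {set T}) (s : seq T) :
  uniq s -> (forall x, x \in s) -> #|D| = count (mem D) s.
Proof.
move=> Us Hs; rewrite cardE -size_filter; apply: perm_size.
apply: uniq_perm; [exact: enum_uniq | exact: filter_uniq | ].
by move=> x; rewrite mem_enum mem_filter Hs andbT.
Qed.

Module P3.
Definition V := ('I_3 * 'I_3)%type.
Definition E : rel V := cart_edge (@Kedge 3) P3edge.
Definition nat2V (k : nat) : V :=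
  (Ordinal (ltn_pmod (k %/ 3) (isT : 0 < 3)), Ordinal (ltn_pmod k (isT : 0 < 3))).
Definition natE (a b : nat) : bool :=
  let i := a %/ 3 in let h := a %% 3 in let j := b %/ 3 in let k := b %% 3 in
  ((i == j) && ((h == k.+1) || (k == h.+1))) || ((h == k) && (i != j)).
Definition domN (p : nat -> bool) :=
  all (fun v => p v || has (fun u => p u && natE u v) (iota 0 9)) (iota 0 9).
Fixpoint allbits n : seq (seq bool) :=
  if n is n'.+1 then [seq b :: s | b <- [:: true; false], s <- allbits n'] else [:: [::]].
Definition Q (bs : seq bool) :=
  let p := fun v => nth false bs v in
  domN p ==> (3 <= count id bs) &&
   ((all (fun x => p x ==> ~~ domN (fun v => p v && (v != x))) (iota 0 9)) ==> (count id bs <= 3)).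

Lemma allQ : all Q (allbits 9).
Proof. vm_compute. reflexivity. Qed.

Lemma allbitsP n bs : size bs = n -> bs \in allbits n.
Proof.
elim: n bs => [|n IH] [|b bs] //= [Hs].
case: b; rewrite !mem_cat.
  by rewrite (map_f _ (IH _ Hs)).
by rewrite (map_f _ (IH _ Hs)) orbT.
Qed.

Lemma nat2V_all : forall v, v \in [seq nat2V k | k <- iota 0 9].
Proof.
case=> [[i Hi] [h Hh]]; (do 3?[case: i Hi => [|i] Hi]) => //; (do 3?[case: h Hh => [|h] Hh]) => //.
all: by [].
Qed.

Lemma nat2V_uniq : uniq [seq nat2V k | k <- iota 0 9].
Proof. by []. Qed.

Lemma natE_ok a b : a < 9 -> b < 9 -> natE a b = E (nat2V a) (nat2V b).
Proof.
move=> Ha Hb; do 9?[case: a Ha => [|a] Ha //]; do 9?[case: b Hb => [|b] Hb //].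
Qed.

Lemma nat2V_eq a b : a < 9 -> b < 9 -> (nat2V a == nat2V b) = (a == b).
Proof.
move=> Ha Hb; do 9?[case: a Ha => [|a] Ha //]; do 9?[case: b Hb => [|b] Hb //].
Qed.

Lemma glue (D : {set V}) (q : nat -> bool) :
  (forall k, k < 9 -> q k = (nat2V k \in D)) -> (dominating E D <-> domN q).
Proof.
move=> Hq; split.
- move=> Hd; apply/allP => k; rewrite mem_iota => /andP [_ Hk].
  case: (Hd (nat2V k)) => [Hin|[u Hu Huv]]; first by rewrite Hq // Hin.
  have := nat2V_all u; case/mapP => j; rewrite mem_iota => /andP [_ Hj] Eu.
  apply/orP; right; apply/hasP; exists j; first by rewrite mem_iota.
  by rewrite Hq // -Eu Hu natE_ok // -Eu.
- move=> Hd v; have := nat2V_all v; case/mapP => k; rewrite mem_iota => /andP [_ Hk] ->.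
  have := allP Hd k; rewrite mem_iota Hk => /(_ isT) /orP [Hin|/hasP [j]].
    by left; rewrite -Hq.
  rewrite mem_iota => /andP [_ Hj] /andP [Hqj Hjk]; right; exists (nat2V j).
    by rewrite -Hq.
  by rewrite -natE_ok.
Qed.

Lemma QD (D : {set V}) : Q [seq nat2V k \in D | k <- iota 0 9].
Proof. apply: (allP allQ); apply: allbitsP; by rewrite size_map size_iota. Qed.

Lemma nthD (D : {set V}) k : k < 9 ->
  nth false [seq nat2V k \in D | k <- iota 0 9] k = (nat2V k \in D).
Proof. move=> Hk; by rewrite (nth_map 0) ?size_iota // nth_iota. Qed.

Lemma countD (D : {set V}) : count id [seq nat2V k \in D | k <- iota 0 9] = #|D|.
Proof.
rewrite count_map (card_count_seq D nat2V_uniq nat2V_all) count_map //.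
Qed.

Lemma P3_wd : well_dominated E.
Proof.
have lower : forall D, dominating E D -> 3 <= #|D|.
  move=> D Hd; have := QD D; rewrite /Q countD => /implyP H.
  have := H _; case/(_ _)/andP => //.
  by apply/(glue (q := fun v => nth false _ v)) => // k Hk; rewrite nthD.
move=> D [Hd Hmin]; split=> // D' Hd'.
apply: leq_trans (lower _ Hd'); have := QD D; rewrite /Q countD.
have -> : domN (fun v => nth false [seq nat2V k \in D | k <- iota 0 9] v) = true.
  by apply/(glue (q := fun v => nth false _ v)) => // k Hk; rewrite nthD.
move=> /implyP /(_ isT) /andP [_ /implyP]; apply; apply/allP => x; rewrite mem_iota => /andP [_ Hx].
rewrite nthD //; apply/implyP => HxD; apply/negP => Hdn.
apply: (Hmin (D :\ nat2V x)); first exact: properD1.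
apply/(glue (q := fun v => nth false [seq nat2V k \in D | k <- iota 0 9] v && (v != x))) => // k Hk.
by rewrite nthD // !inE nat2V_eq // andbC.
Qed.
End P3.

Section Main.
Variables (m : nat) (T : finType) (e : rel T).
Hypotheses (Hm : 2 <= m) (Hsym : symmetric e) (Hirr : irreflexive e)
  (Hconn : connected_graph e) (Hn2 : 2 <= #|T|).

Local Notation G := (cart_edge (@Kedge m) e).

Definition i0 : 'I_m := Ordinal (ltnW Hm).
Definition i1 : 'I_m := Ordinal Hm.
Lemma i10 : i1 != i0. Proof. by []. Qed.

Lemma notin_ex (A : {set T}) : #|A| < #|T| -> exists x, x \notin A.
Proof.
rewrite -(cardsC A) -{1}(addn0 #|A|) ltn_add2l card_gt0 => /set0Pn [x].
by rewrite inE => Hx; exists x.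
Qed.

Lemma nb h0 : exists a, e h0 a.
Proof.
have [h1] : exists h1, h1 \notin [set h0] by apply: notin_ex; rewrite cards1.
rewrite inE => Hne; case/connectP: (Hconn h0 h1) => [[|a p]] /=.
  by move=> _ E; rewrite E eqxx in Hne.
by case/andP => Ha _ _; exists a.
Qed.

Lemma strict (D : {set 'I_m * T}) x : x \in D ->
  (forall i, exists2 u, u \in D :\ x & u.1 = i) -> m < #|D|.
Proof.
move=> Hx Hc; rewrite (cardsD1 x) Hx add1n ltnS; exact: (proj_lower Hc).
Qed.

Lemma wd_bound (Hwd : well_dominated G) D : minimal_dominating G D -> #|D| <= #|T|.
Proof.
move=> HD; have [_ Hmin] := Hwd D HD.
set D0 := setX [set i0] [set: T].
have -> : #|T| = #|D0| by rewrite cardsX cards1 cardsT mul1n.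
apply: Hmin => [[i h]]; case: (eqVneq i i0) => [->|Hi].
  by left; rewrite !inE eqxx.
right; exists (i0, h); first by rewrite !inE eqxx.
by rewrite /cart_edge /Kedge /= eqxx eq_sym Hi orbT.
Qed.

Definition F h0 := [set h | (h != h0) && ~~ e h0 h].

Lemma c1 h0 : exists D' : {set 'I_m * T}, minimal_dominating G D' /\
  (forall i, i != i0 -> (i, h0) \in D') /\ (forall h, h \in F h0 -> (i0, h) \in D') /\
  (F h0 = set0 -> (i0, h0) \in D').
Proof.
set D := [set u : 'I_m * T | (u.2 == h0) || ((u.1 == i0) && (u.2 \in F h0))].
have Hd : dominating G D.
  move=> [i h]; case: (eqVneq h h0) => [->|Hh]; first by left; rewrite inE eqxx.
  case Heh: (e h0 h).
    by right; exists (i, h0); rewrite ?inE ?eqxx //= /cart_edge /= eqxx Heh.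
  have HF : h \in F h0 by rewrite inE Hh Heh.
  case: (eqVneq i i0) => [->|Hi]; first by left; rewrite inE eqxx HF orbT.
  right; exists (i0, h); first by rewrite inE eqxx HF orbT.
  by rewrite /cart_edge /Kedge /= eqxx eq_sym Hi orbT.
have [D' [Hs Hmin]] := exists_min Hd.
exists D'; split=> //.
have [a Ha] := nb h0.
have Hah : a != h0 by apply: contraTneq Ha => ->; rewrite Hirr.
have HaF : a \notin F h0 by rewrite inE Ha andbF.
have P1 : forall i, (i != i0) || (F h0 == set0) -> (i, h0) \in D'.
  move=> i Hi; apply: (priv_in (v := (i, a)) Hs (proj1 Hmin)).
  move=> [j k]; rewrite inE /= /cart_edge /Kedge /= => Hu.
  case: (eqVneq k a) => [Eka|Hka].
    by move: Hu; rewrite Eka (negbTE Hah) (negbTE HaF) andbF.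
  rewrite xpair_eqE (negbTE Hka) andbF /= orbF => /andP [/eqP Eji Hek]; subst j.
  case/orP: Hu => [/eqP -> //|/andP [/eqP Ei HkF]]; subst i.
  move: Hi; rewrite eqxx /= => /eqP HF0; by rewrite HF0 inE in HkF.
split; first by move=> i Hi; apply: P1; rewrite Hi.
split; last by move=> HF0; apply: P1; rewrite HF0; apply/orP; right.
move=> h HF; have := HF; rewrite inE => /andP [Hh Heh].
apply: (priv_in (v := (i1, h)) Hs (proj1 Hmin)).
move=> [j k]; rewrite inE /= /cart_edge /Kedge /= => Hu.
case: (eqVneq k h) => [Ekh|Hkh].
  subst k; rewrite HF andbT (negbTE Hh) /= in Hu; by rewrite (eqP Hu).
rewrite xpair_eqE (negbTE Hkh) andbF /= orbF => /andP [/eqP Eji Hek]; subst j.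
case/orP: Hu => [/eqP Ek|/andP [/eqP Ei _]]; last by move: i10; rewrite Ei eqxx.
by subst k; rewrite Hek in Heh.
Qed.


Definition noB1 := forall h0 h1 h2, h1 != h0 -> h2 != h0 -> h1 != h2 ->
  ~~ e h0 h1 -> ~~ e h0 h2 -> False.

Lemma not_lt (Hwd : well_dominated G) : #|T| < m -> False.
Proof.
move=> Hlt.
have [h0 _] : exists h0 : T, h0 \notin (set0 : {set T}).
  by apply: notin_ex; rewrite cards0; exact: ltnW Hn2.
have [D' [HD [P1 [P2 P3]]]] := c1 h0.
have := wd_bound Hwd HD => Hb.
have : m <= #|D'|.
  apply: (proj_lower (p := fst)) => i; case: (eqVneq i i0) => [->|Hi]; last by exists (i, h0) => //; apply: P1.
  case: (eqVneq (F h0) set0) => [HF0|/set0Pn [h Hh]]; first by exists (i0, h0) => //; apply: P3.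
  by exists (i0, h) => //; apply: P2.
move=> Hl; have := leq_ltn_trans Hl (leq_ltn_trans Hb Hlt); by rewrite ltnn.
Qed.

Lemma B1 (Hwd : well_dominated G) : #|T| = m -> noB1.
Proof.
move=> Hn h0 h1 h2 H10 H20 H12 He1 He2.
have [D' [HD [P1 [P2 P3]]]] := c1 h0.
have F1 : h1 \in F h0 by rewrite inE H10 He1.
have F2 : h2 \in F h0 by rewrite inE H20 He2.
have := wd_bound Hwd HD; rewrite Hn => Hb.
have : m < #|D'|.
  apply: (@strict _ (i0, h1)); first exact: P2.
  move=> i; case: (eqVneq i i0) => [->|Hi].
    by exists (i0, h2); rewrite // !inE P2 // andbT xpair_eqE eqxx /= eq_sym.
  exists (i, h0); rewrite // !inE P1 // andbT xpair_eqE.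
  by rewrite (negbTE Hi).
by rewrite ltnNge Hb.
Qed.

Lemma B2 (Hwd : well_dominated G) : #|T| = m -> 4 <= m -> noB1 ->
  forall d, (forall h, h != d -> e d h) -> forall x y, x != y -> ~~ e x y -> False.
Proof.
move=> Hn H4 NB d Hd x y Hxy Hexy.
have Hxd : x != d.
  apply/eqP => Exd; subst x; have := Hd y; rewrite eq_sym => /(_ Hxy).
  by rewrite (negbTE Hexy).
have Hyd : y != d.
  apply/eqP => Eyd; subst y; have := Hd x Hxy; by rewrite -Hsym (negbTE Hexy).
have [w] : exists w, w \notin d |: [set x; y].
  apply: notin_ex; rewrite cardsU1 cards2 Hn.
  by apply: leq_ltn_trans H4; case: (d \notin _); case: (x != y).
rewrite !inE negb_or => /andP [Hwd' /norP [Hwx Hwy]].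
pose D := [set u : 'I_m * T | ((u.2 == d) && (u.1 != i0)) || ((u.1 == i0) && ((u.2 == x) || (u.2 == y)))].
have Hdom : dominating G D.
  move=> [i h]; case: (eqVneq h d) => [->|Hhd].
    case: (eqVneq i i0) => [->|Hi]; last by left; rewrite inE eqxx Hi.
    right; exists (i0, x); first by rewrite inE eqxx eqxx orbT.
    by rewrite /cart_edge /= ?eqxx Hsym Hd.
  case Hxy' : ((h == x) || (h == y)).
    case: (eqVneq i i0) => [->|Hi]; first by left; rewrite inE eqxx Hxy' orbT.
    right; exists (i0, h); first by rewrite inE eqxx Hxy' orbT.
    by rewrite /cart_edge /Kedge /= ?eqxx eq_sym Hi orbT.
  case/norP: Hxy' => Hhx Hhy.
  right; case: (eqVneq i i0) => [->|Hi].
    exists (i0, x); first by rewrite inE !eqxx orbT.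
    rewrite /cart_edge /= ?eqxx /=; case Hexh: (e x h) => //=; exfalso.
    apply: (NB x y h) => //; [by rewrite eq_sym | by rewrite eq_sym | by rewrite Hexh].
  exists (i, d); first by rewrite inE eqxx Hi.
  by rewrite /cart_edge /= ?eqxx Hd.
have [D' [Hs [HD' Hmin]]] := exists_min Hdom.
have Px : forall x y, x != y -> x != d -> ~~ e x y ->
    D = [set u : 'I_m * T | ((u.2 == d) && (u.1 != i0)) || ((u.1 == i0) && ((u.2 == x) || (u.2 == y)))] ->
    (i0, x) \in D'.
  move=> x' y' Hxy2 Hxd2 Hexy2 ED.
  apply: (priv_in (v := (i0, x')) Hs HD'); rewrite ED.
  move=> [j l]; rewrite inE /= /cart_edge /Kedge /= => Hu.
  case/orP => [/eqP -> //|/orP [/andP [/eqP Ej Hel]|/andP [/eqP El Hj]]].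
    subst j; move: Hu; rewrite eqxx /= andbF /=.
    by case/orP => /eqP El; subst l; rewrite ?Hirr // Hsym (negbTE Hexy2) in Hel.
  by subst l; move: Hu; rewrite (negbTE Hxd2) /= (negbTE Hj).
have Hx' := Px x y Hxy Hxd Hexy erefl.
have Hy' : (i0, y) \in D'.
  apply: (Px y x) => //; first by rewrite eq_sym.
    by rewrite Hsym.
  by apply/setP => u; rewrite !inE (orbC (u.2 == y)).
have Hdk : forall k, k != i0 -> (k, d) \in D'.
  move=> k Hk; apply: (priv_in (v := (k, w)) Hs HD').
  move=> [j l]; rewrite inE /= /cart_edge /Kedge /= => Hu.
  case: (eqVneq l w) => [Elw|Hlw].
    by subst l; move: Hu; rewrite (negbTE Hwd') (negbTE Hwx) (negbTE Hwy) andbF.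
  rewrite xpair_eqE (negbTE Hlw) andbF /= orbF => /andP [/eqP Ejk _]; subst j.
  by move: Hu; rewrite (negbTE Hk) /= ?andbT ?orbF => /eqP ->.
have := wd_bound Hwd (conj HD' Hmin); rewrite Hn => Hb.
have : m < #|D'|.
  apply: (@strict _ (i0, x)) => // i; case: (eqVneq i i0) => [->|Hi].
    by exists (i0, y); rewrite // !inE Hy' andbT xpair_eqE ?eqxx /= eq_sym.
  by exists (i, d); rewrite // !inE Hdk // andbT xpair_eqE (negbTE Hi).
by rewrite ltnNge Hb.
Qed.


Lemma B3 (Hwd : well_dominated G) : #|T| = m -> noB1 ->
  (forall h, exists h', h' != h /\ ~~ e h h') -> False.
Proof.
move=> Hn NB NU.
have [a] : exists a : T, true.
  have [a _] : exists h0 : T, h0 \notin (set0 : {set T}).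
    by apply: notin_ex; rewrite cards0; exact: ltnW Hn2.
  by exists a.
move=> _; have [c Hac] := nb a.
have [a' [Ha'a Hea']] := NU a.
have [c' [Hc'c Hec']] := NU c.
have Hacn : a != c by apply/eqP => E; subst c; rewrite Hirr in Hac.
have Ha'c : a' != c by apply/eqP => E; subst a'; rewrite Hac in Hea'.
have Hc'a : c' != a by apply/eqP => E; subst c'; rewrite Hsym Hac in Hec'.
have Eca' : e c a'.
  case H: (e c a') => //; exfalso.
  apply: (NB a' a c); [by rewrite eq_sym | by rewrite eq_sym | exact: Hacn
    | by rewrite Hsym | by rewrite Hsym H].
have Eac' : e a c'.
  case H: (e a c') => //; exfalso.
  apply: (NB c' a c); [by rewrite eq_sym Hc'a | by rewrite eq_sym | exact: Hacn
    | by rewrite Hsym H | by rewrite Hsym].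
pose D := [set u : 'I_m * T | (u.2 == a) || (u.2 == c)].
have Hdom : dominating G D.
  move=> [i h]; case Hh: ((h == a) || (h == c)); first by left; rewrite inE Hh.
  case/norP: Hh => Hha Hhc; right.
  case Hah: (e a h).
    by exists (i, a); rewrite ?inE ?eqxx //= /cart_edge /= ?eqxx Hah.
  case Hch: (e c h).
    by exists (i, c); rewrite ?inE ?eqxx ?orbT //= /cart_edge /= ?eqxx Hch.
  exfalso; apply: (NB h a c); [by rewrite eq_sym | by rewrite eq_sym | exact: Hacn
    | by rewrite Hsym Hah | by rewrite Hsym Hch].
have [D' [Hs [HD' Hmin]]] := exists_min Hdom.
have Priv : forall p r pp i, pp != p -> pp != r -> e p pp -> ~~ e r pp ->
    D = [set u : 'I_m * T | (u.2 == p) || (u.2 == r)] -> (i, p) \in D'.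
  move=> p r pp i Hp Hr Hepp Herp ED.
  apply: (priv_in (v := (i, pp)) Hs HD'); rewrite ED.
  move=> [j l]; rewrite inE /= /cart_edge /Kedge /= => Hu.
  case: (eqVneq l pp) => [Elp|Hlp].
    by subst l; move: Hu; rewrite (negbTE Hp) (negbTE Hr).
  rewrite xpair_eqE (negbTE Hlp) andbF /= orbF => /andP [/eqP Eji Hel]; subst j.
  case/orP: Hu => /eqP El; subst l => //.
  by rewrite Hel in Herp.
have Hc : forall i, (i, c) \in D'.
  move=> i; apply: (Priv c a a') => //.
  by apply/setP => u; rewrite !inE orbC.
have Ha : (i0, a) \in D' by apply: (Priv a c c') => //; rewrite eq_sym.
have := wd_bound Hwd (conj HD' Hmin); rewrite Hn => Hb.
have : m < #|D'|.
  apply: (@strict _ (i0, a)) => // i.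
  by exists (i, c); rewrite // !inE Hc andbT xpair_eqE (eq_sym c a) (negbTE Hacn) andbF.
by rewrite ltnNge Hb.
Qed.

Lemma set2_all (x y : T) : #|T| = 2 -> x != y -> forall t, (t == x) || (t == y).
Proof.
move=> H2 Hxy t.
have : [set x; y] = [set: T].
  apply/eqP; rewrite eqEcard subsetT cardsT H2 cards2 Hxy //.
by move/setP/(_ t); rewrite !inE.
Qed.

Lemma set3_all (x y z : T) : #|T| = 3 -> x != y -> z \notin [set x; y] ->
  forall t, [|| t == x, t == y | t == z].
Proof.
move=> H3 Hxy Hz t.
have : z |: [set x; y] = [set: T].
  apply/eqP; rewrite eqEcard subsetT cardsT H3 cardsU1 cards2 Hxy Hz //.
move/setP/(_ t); rewrite !inE => H.
by move: H; case: (t == z); rewrite ?orbT ?orbF.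
Qed.

End Main.

Lemma iso_complete (m : nat) (T : finType) (e : rel T) :
  irreflexive e -> #|T| = m -> (forall x y, x != y -> e x y) -> graph_iso e (@Kedge m).
Proof.
move=> Hirr Hn Hc.
exists (fun x => cast_ord Hn (enum_rank x)); split.
  exists (fun i => enum_val (cast_ord (esym Hn) i)) => x /=.
    by rewrite cast_ordK enum_rankK.
  by rewrite enum_valK cast_ordKV.
move=> x y; rewrite /Kedge (inj_eq (cast_ord_inj (eq_n := Hn))) (inj_eq enum_rank_inj).
case: (eqVneq x y) => [->|Hxy]; [by rewrite Hirr | by rewrite Hc].
Qed.

Lemma iso_P3 (T : finType) (e : rel T) :
  symmetric e -> irreflexive e -> connected_graph e -> #|T| = 3 ->
  forall x y, x != y -> ~~ e x y -> graph_iso e P3edge.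
Proof.
move=> Hsym Hirr Hconn H3 x y Hxy Hexy.
have Hn2 : 1 < #|T| by rewrite H3.
have [z Hz] : exists z, z \notin [set x; y].
  by apply: notin_ex; rewrite cards2 Hxy H3.
have Hall := set3_all H3 Hxy Hz.
move: Hz; rewrite !inE negb_or => /andP [Hzx Hzy].
have Exz : e x z.
  have [a Ha] := nb Hconn Hn2 x.
  case/or3P: (Hall a) => /eqP Ea; subst a => //; first by rewrite Hirr in Ha.
  by rewrite Ha in Hexy.
have Eyz : e y z.
  have [a Ha] := nb Hconn Hn2 y.
  case/or3P: (Hall a) => /eqP Ea; subst a => //; last by rewrite Hirr in Ha.
  by rewrite Hsym Ha in Hexy.
pose o0 : 'I_3 := Ordinal (isT : 0 < 3).
pose o1 : 'I_3 := Ordinal (isT : 1 < 3).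
pose o2 : 'I_3 := Ordinal (isT : 2 < 3).
pose f t := if t == x then o0 else if t == z then o1 else o2.
pose g (k : 'I_3) := if k == o0 then x else if k == o1 then z else y.
have fx : f x = o0 by rewrite /f eqxx.
have fz : f z = o1 by rewrite /f eqxx (negbTE Hzx).
have fy : f y = o2 by rewrite /f eq_sym (negbTE Hxy) eq_sym (negbTE Hzy).
exists f; split.
  exists g.
    move=> t; case/or3P: (Hall t) => /eqP ->; by rewrite ?fx ?fy ?fz.
  by move=> [[|[|[|k]]] Hk] //; rewrite /g /= ?fx ?fy ?fz; apply/val_inj.
have Hyx : y != x by rewrite eq_sym.
move=> p q; case/or3P: (Hall p) => /eqP ->; case/or3P: (Hall q) => /eqP ->;
  rewrite ?fx ?fy ?fz ?Hirr //.
- by rewrite (negbTE Hexy).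
- by rewrite Hsym (negbTE Hexy).
- by rewrite Hsym Exz.
- by rewrite Hsym Eyz.
Qed.

Unset Implicit Arguments.

Theorem proposition21 (m : nat) (T : finType) (e : rel T) :
  2 <= m ->
  simple_graph e -> connected_graph e ->
  2 <= #|T| -> #|T| <= m ->
  (well_dominated (cart_edge (@Kedge m) e) <->
    [\/ (m = 2 /\ graph_iso e (@Kedge 2)),
        (m = 3 /\ (graph_iso e (@Kedge 3) \/ graph_iso e P3edge))
      | (4 <= m /\ graph_iso e (@Kedge m))]).
Proof.
move=> Hm [Hsym Hirr] Hconn Hn2 Hnm; split; last first.
  case=> [[Em Hi]|[Em [Hi|Hi]]|[_ Hi]]; subst; try exact: iso_complete_wd.
  case: Hi => f [Hb Hf]; apply: (cart_transfer Hb Hf); exact: P3.P3_wd.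
move=> Hwd.
have Hn : #|T| = m.
  case: (ltnP #|T| m) => [Hlt|Hge]; last by apply/eqP; rewrite eqn_leq Hnm Hge.
  by case: (not_lt Hm Hirr Hconn Hn2 Hwd Hlt).
case: (classic (forall x y, x != y -> e x y)) => [Hc|Hnc].
  have Hi := iso_complete Hirr Hn Hc.
  have : (m = 2) \/ (m = 3) \/ (4 <= m).
    by case: m Hm {Hwd Hnm Hn Hi} => [|[|[|[|m]]]] //= _; auto.
  case=> [Em|[Em|H4]]; move: Hi; rewrite ?Em => Hi.
  - by apply: Or31; split.
  - by apply: Or32; split=> //; left.
  - by apply: Or33; split.
have [x [y [Hxy Hexy]]] : exists x y, x != y /\ ~~ e x y.
  apply: NNPP => H; apply: Hnc => x y Hxy; apply/negPn/negP => Hexy.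
  by apply: H; exists x, y.
have : (m = 2) \/ (m = 3) \/ (4 <= m).
  by case: m Hm {Hwd Hnm Hn} => [|[|[|[|m]]]] //= _; auto.
case=> [Em|[Em|H4]].
- rewrite Em in Hn; exfalso.
  have [a Ha] := nb Hconn Hn2 x.
  case/orP: (set2_all Hn Hxy a) => /eqP Ea; subst a; first by rewrite Hirr in Ha.
  by rewrite Ha in Hexy.
- rewrite Em in Hn *; apply: Or32; split=> //; right; exact: (iso_P3 Hsym Hirr Hconn Hn Hxy Hexy).
exfalso.
have NB := B1 Hm Hirr Hconn Hn2 Hwd Hn.
case: (classic (exists d, forall h, h != d -> e d h)) => [[d Hd]|NU].
  exact: (B2 Hm Hsym Hirr Hwd Hn H4 NB Hd Hxy Hexy).
apply: (B3 Hm Hsym Hirr Hconn Hn2 Hwd Hn NB) => h.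
apply: NNPP => H; apply: NU; exists h => h' Hh'; apply/negPn/negP => He.
by apply: H; exists h'.
Qed.
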